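(* Let $b\ge2$ and $k\in\mathbb{N}$, and let $f\in\mathcal{M}^b$ be a multiset whose maximal element is at most $k$ and which is not the constant $0$ function. Then $d(f)\le d([k]_b)$, and the inequality is strict if $f\neq[k]_b$. Equivalently, in any base $b\ge3$, among all $k$-digit numbers $n$ (in base $b$), the number $d_b(n)$ of lunar divisors has a unique maximum at $n=(b^k-1)/(b-1)$, whose base-$b$ expansion is $11\ldots1$.
   Context: $\mathbb{N}=\{0,1,2,\ldots\}$, $[k]=\{0,1,\ldots,k\}$. For $b\ge1$, $\mathcal{M}^b$ is the set of finite multisets of natural numbers with multiplicities at most $b$, i.e. functions $f:\mathbb{N}\to\{0,1,\ldots,b\}$ with $f(j)=0$ for all large $j$. The set-array representation of $f$ is $(A_1,\ldots,A_b)$ where $A_i=\{a\in\mathbb{N}: f(a)\ge i\}$ (so $A_1\supseteq A_2\supseteq\cdots\supseteq A_b$). The sum of multisets is defined coordinatewise on set arrays: $(A_1,\ldots,A_b)+(B_1,\ldots,B_b)=(A_1+B_1,\ldots,A_b+B_b)$, where $S+T=\{s+t:s\in S,t\in T\}$ and $S+\emptyset=\emptyset$. A multiset $g\in\mathcal{M}^b$ is a divisor of $f$ if $f=g+h$ for some $h\in\mathcal{M}^b$; for $f$ not identically $0$, $d(f)$ is the number of divisors of $f$. $[k]_b\in\mathcal{M}^b$ is the multiset with set-array representation $([k],\emptyset,\ldots,\emptyset)$. Base-$b$ lunar product: for $x=\sum_ix_ib^i$, $y=\sum_jy_jb^j$ with digits in $\{0,\ldots,b-1\}$, $x\otimes y=\sum_n(\max_{i+j=n}\min(x_i,y_j))b^n$;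 $d_b(n)$ is the number of positive integers $m$ with $m\otimes q=n$ for some integer $q$. *)

(* Defs.v *)
From mathcomp Require Import all_boot.
Set Implicit Arguments. Unset Strict Implicit. Unset Printing Implicit Defensive.

(* A multiset f in M^b is represented canonically by the sequence of its
   multiplicities [f 0; f 1; ...; f N] with no trailing zero (the zero
   multiset is [::]).  Every entry is at most b. *)
Definition mset (b : nat) (s : seq nat) : bool :=
  all (fun x => x <= b) s && (last 1 s != 0).

Definition mult (s : seq nat) (a : nat) : nat := nth 0 s a.

Definition level (s : seq nat) (i : nat) : nat -> Prop := fun a => i <= mult s a.

Definition sumset (S T : nat -> Prop) : nat -> Prop :=
  fun c => exists x y, x + y = c /\ S x /\ T y.

(* f = g + h : the set arrays satisfy A_i(f) = A_i(g) + A_i(h), i = 1..b *)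
Definition msum_eq (b : nat) (f g h : seq nat) : Prop :=
  forall i, 1 <= i <= b -> forall c, level f i c <-> sumset (level g i) (level h i) c.

Definition divisor (b : nat) (g f : seq nat) : Prop :=
  mset b g /\ exists h, mset b h /\ msum_eq b f g h.

Definition ndiv (b : nat) (f : seq nat) (n : nat) : Prop :=
  exists l : seq (seq nat), uniq l /\ size l = n /\
    forall g, g \in l <-> divisor b g f.

(* [k]_b : set array ([k], empty, ..., empty), i.e. multiplicity 1 on 0..k *)
Definition kset (k : nat) : seq nat := nseq k.+1 1.

(* Main.v *)
From Stdlib Require ClassicalEpsilon.
Require Import Defs.
From mathcomp Require Import all_boot zify.
Set Implicit Arguments. Unset Strict Implicit. Unset Printing Implicit Defensive.

Lemma mult_out s y : size s <= y -> mult s y = 0.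
Proof. by move=> H; rewrite /mult nth_default. Qed.

Lemma mult_pos_lt s y : 0 < mult s y -> y < size s.
Proof. by case: (ltnP y (size s)) => // H; rewrite mult_out. Qed.

Lemma mult_le b s y : mset b s -> mult s y <= b.
Proof.
  case/andP => /allP H _; rewrite /mult.
  case: (ltnP y (size s)) => Hy; first exact: H _ (mem_nth 0 Hy).
  by rewrite nth_default.
Qed.

Lemma mset_last b s : mset b s -> s <> [::] -> 0 < mult s (size s).-1.
Proof.
  case/andP => _; case: s => [//|x s] /= Hl _.
  rewrite /mult (nth_last 0 (x :: s)) /=.
  by rewrite lt0n; move: Hl; clear; elim: s x => //=.
Qed.

Lemma mset_eq b s t : mset b s -> mset b t -> (forall a, mult s a = mult t a) -> s = t.
Proof.
  move=> Hs Ht E.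
  have Hsz : size s = size t.
    case: (ltngtP (size s) (size t)) => // H.
    - have Htn : t <> [::] by move=> Et; rewrite Et in H.
      have := mset_last Ht Htn; rewrite -E mult_out //; lia.
    - have Hsn : s <> [::] by move=> Et; rewrite Et in H.
      have := mset_last Hs Hsn; rewrite E mult_out //; lia.
  apply: (eq_from_nth (x0:=0) Hsz) => i _; exact: E.
Qed.

Definition lo (s : seq nat) := find (fun x => 0 < x) s.
Definition hi (s : seq nat) := (size s).-1.

Lemma lo_min s y : 0 < mult s y -> lo s <= y.
Proof.
  move=> H; case: (leqP (lo s) y) => // Hy.
  by have := before_find 0 Hy; rewrite /mult in H; rewrite H.
Qed.

Lemma lo_pos s y : 0 < mult s y -> 0 < mult s (lo s).
Proof.
  move=> H; apply: (nth_find 0 (a := fun x => 0 < x)).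
  apply/hasP; exists (nth 0 s y) => //; apply: mem_nth; exact: mult_pos_lt.
Qed.

Lemma hi_max s y : 0 < mult s y -> y <= hi s.
Proof. move/mult_pos_lt; rewrite /hi; lia. Qed.

Lemma hi_pos b s y : mset b s -> 0 < mult s y -> 0 < mult s (hi s).
Proof.
  move=> Hs Hy; apply: (mset_last Hs) => Es; rewrite Es in Hy.
  by rewrite /mult nth_nil in Hy.
Qed.

Lemma mult_kset n x : mult (kset n) x = if x <= n then 1 else 0.
Proof. by rewrite /mult /kset nth_nseq ltnS. Qed.

Lemma mset_kset b n : 1 <= b -> mset b (kset n).
Proof.
  move=> Hb; apply/andP; split; first by rewrite all_nseq Hb orbT.
  by rewrite /kset; elim: n => //= n; case: n.
Qed.

Lemma sum1 b f g h : 1 <= b -> msum_eq b f g h -> forall c,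
  0 < mult f c <-> exists x y, x + y = c /\ 0 < mult g x /\ 0 < mult h y.
Proof. move=> Hb E c; have := E 1; rewrite leqnn Hb; apply => //. Qed.

Fixpoint allseq (b n : nat) : seq (seq nat) :=
  if n is n'.+1 then [seq x :: s | x <- iota 0 b.+1, s <- allseq b n'] else [:: [::]].

Lemma mem_allseq b s : all (fun x => x <= b) s -> s \in allseq b (size s).
Proof.
  elim: s => [|x s IH]; first by [].
  move=> /andP[Hx Hs]; change (x :: s \in [seq y :: t | y <- iota 0 b.+1, t <- allseq b (size s)]).
  apply/allpairsP.
  exists (x, s); split; [change (x \in iota 0 b.+1); rewrite mem_iota; lia | exact: IH | by []].
Qed.

Definition univ b N := flatten [seq allseq b n | n <- iota 0 N.+1].

Definition dec (P : Prop) : bool :=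
  if ClassicalEpsilon.excluded_middle_informative P then true else false.

Lemma decP (P : Prop) : dec P <-> P.
Proof. rewrite /dec; case: ClassicalEpsilon.excluded_middle_informative => //. Qed.

Lemma list_ex b (P : seq nat -> Prop) N :
  (forall g, P g -> mset b g /\ size g <= N) ->
  exists l, uniq l /\ forall g, g \in l <-> P g.
Proof.
  move=> HP; exists (undup (filter (fun g => dec (P g)) (univ b N))).
  split; first exact: undup_uniq.
  move=> g; rewrite mem_undup mem_filter; split.
  - by case/andP => /decP.
  - move=> Pg; have [/andP[Ha _] Hs] := HP g Pg; apply/andP; split; first exact/decP.
    apply/flatten_mapP; exists (size g); first by rewrite mem_iota add0n ltnS.
    exact: mem_allseq.
Qed.

Lemma div_kset b k w : 1 <= b -> mset b w ->
  (forall z, z <= k -> exists x, [/\ x <= z, 0 < mult w x & z - x + size w <= k.+1]) ->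
  divisor b w (kset k).
Proof.
  move=> Hb Hw Hgap; split => //.
  have [x0 [_ _ Hsz]] := Hgap 0 (leq0n _).
  exists (kset (k.+1 - size w)); split; first exact: mset_kset.
  move=> i /andP[Hi1 Hib] c; rewrite /level /sumset.
  case: (ltnP 1 i) => Hi.
  - split; first by rewrite mult_kset; case: ifP => _; lia.
    by case=> x [y [_ [_]]]; rewrite mult_kset; case: ifP => _; lia.
  - have -> : i = 1 by lia.
    split.
    + rewrite mult_kset; case: ifP => Hc H; last by lia.
      have [x [Hx Hwx Hs]] := Hgap c Hc.
      exists x, (c - x); split; first lia.
      split => //; rewrite mult_kset; case: ifP => // /negbT; lia.
    + case=> x [y [<- [Hx Hy]]]; move: Hy; rewrite !mult_kset.
      have Hxs := mult_pos_lt Hx.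
      case: ifP => // Hy _; case: ifP => // /negbT; lia.
Qed.

Lemma div_size b g f : 1 <= b -> (exists a, 0 < mult f a) -> divisor b g f -> size g <= size f.
Proof.
  move=> Hb [c Hc] [Hg [h [Hh E]]].
  have E1 := sum1 Hb E.
  have [x0 [y0 [_ [Ax By]]]] := (E1 c).1 Hc.
  have Ha := hi_pos Hg Ax.
  have : 0 < mult f (hi g + y0) by apply/(E1 _).2; exists (hi g), y0.
  move/mult_pos_lt; have := mult_pos_lt Ax; rewrite /hi; lia.
Qed.

Definition Fi (f g : seq nat) (x : nat) : nat :=
  if x <= hi g - lo g then (if 0 < mult f (x + lo f) then mult g (x + lo g) else 2)
  else if x - (hi g - lo g) == lo g then 1 else 2.

Definition phi (f g : seq nat) : seq nat := mkseq (Fi f g) ((hi g - lo g) + lo f).+1.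

Lemma mult_phi f g x :
  mult (phi f g) x = if x < ((hi g - lo g) + lo f).+1 then Fi f g x else 0.
Proof.
  rewrite /mult /phi; case: ifP => H; first by rewrite nth_mkseq.
  by rewrite nth_default // size_mkseq leqNgt H.
Qed.

Lemma mult_phi_low f g x : x <= hi g - lo g ->
  mult (phi f g) x = if 0 < mult f (x + lo f) then mult g (x + lo g) else 2.
Proof.
  move=> Hx; rewrite mult_phi /Fi Hx; case: ifP => // /negbT; lia.
Qed.

Lemma mult_phi_top f g j : 1 <= j <= lo f ->
  mult (phi f g) (hi g - lo g + j) = if j == lo g then 1 else 2.
Proof.
  move=> Hj; rewrite mult_phi /Fi.
  have -> : (hi g - lo g + j < (hi g - lo g + lo f).+1) = true by lia.
  have -> : (hi g - lo g + j <= hi g - lo g) = false by lia.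
  by rewrite addKn.
Qed.

Lemma div_facts b k f g : 1 <= b -> (forall a, k < a -> mult f a = 0) ->
  (exists a, 0 < mult f a) -> divisor b g f ->
  exists h, [/\ mset b g, msum_eq b f g h,
    (forall c, 0 < mult f c <-> exists x y, x + y = c /\ 0 < mult g x /\ 0 < mult h y),
    0 < mult f (lo f) & (forall y, 0 < mult f y -> lo f <= y <= k)] /\
  [/\ 0 < mult g (lo g), 0 < mult g (hi g), (forall y, 0 < mult g y -> lo g <= y <= hi g),
     lo g <= lo f & 0 < mult h (lo f - lo g)] /\
  [/\ (forall q, 0 < mult h q -> lo f <= lo g + q),
      (forall p q, 0 < mult g p -> 0 < mult h q -> p + q <= k) &
      (forall x, 0 < mult g (x + lo g) -> 0 < mult f (x + lo f))].
Proof.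
  move=> Hb Hk [c0 Hc0] [Hg [h [Hh E]]].
  have E1 := sum1 Hb E.
  have [x0 [y0 [_ [Ax0 By0]]]] := (E1 c0).1 Hc0.
  have Sm := lo_pos Hc0.
  have Aal := lo_pos Ax0.
  have Aa := hi_pos Hg Ax0.
  have Sk : forall c, 0 < mult f c -> c <= k.
    by move=> c; case: (leqP c k) => // /Hk ->.
  have F1 : forall q, 0 < mult h q -> lo f <= lo g + q.
    move=> q Bq; apply: lo_min; apply/(E1 _).2; by exists (lo g), q.
  have [alm Bma] : lo g <= lo f /\ 0 < mult h (lo f - lo g).
    have [x [y [Exy [Ax By]]]] := (E1 _).1 Sm.
    have h1 := lo_min Ax; have h2 := F1 _ By.
    have -> : lo f - lo g = y by lia.
    split => //; lia.
  have F4 : forall p q, 0 < mult g p -> 0 < mult h q -> p + q <= k.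
    move=> p q Ap Bq; apply: Sk; apply/(E1 _).2; by exists p, q.
  exists h; split; [split => // | split; [split => // | split => //]].
  - move=> y Hy; rewrite lo_min // Sk //.
  - move=> y Hy; rewrite lo_min // hi_max //.
  - move=> x Hx; apply/(E1 _).2; exists (x + lo g), (lo f - lo g); split; [lia | by []].
Qed.

Lemma last_mult s : s <> [::] -> last 1 s = mult s (size s).-1.
Proof. case: s => [//|x s] _; by rewrite /mult (nth_last 0 (x :: s)). Qed.

Lemma phi_pos_low f g x : x <= hi g - lo g -> 0 < mult g (x + lo g) -> 0 < mult (phi f g) x.
Proof. by move=> Hx Hg; rewrite mult_phi_low //; case: ifP. Qed.

Lemma phi_div b k f g : 2 <= b -> (forall a, k < a -> mult f a = 0) ->
  (exists a, 0 < mult f a) -> divisor b g f -> divisor b (phi f g) (kset k).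
Proof.
  move=> Hb Hk Hnz D.
  have Hb1 : 1 <= b by lia.
  have [h [[Hg E E1 Sm Smin] [[Aal Aa Ar alm Bma] [F1 F4 F5]]]] := div_facts Hb1 Hk Hnz D.
  have ala : lo g <= hi g by have := Ar _ Aal; lia.
  have Htm : hi g - lo g + lo f <= k by have := F4 _ _ Aa Bma; lia.
  have Htop : 0 < mult (phi f g) (hi g - lo g + lo f).
    case: (posnP (lo f)) => Hm.
    - rewrite Hm addn0; apply: phi_pos_low => //; by rewrite subnK.
    - rewrite mult_phi_top; last by lia. by case: ifP.
  have Hsz : size (phi f g) = (hi g - lo g + lo f).+1 by rewrite size_mkseq.
  apply: div_kset => //.
  - apply/andP; split.
    + apply/(all_nthP 0) => i Hi; rewrite -/(mult _ i) mult_phi /Fi.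
      case: ifP => _; last lia.
      case: ifP => _; first (case: ifP => _; [exact: mult_le Hg | lia]).
      case: ifP => _; lia.
    + have Hne : phi f g <> [::] by move=> E0; rewrite E0 in Hsz.
      rewrite last_mult // Hsz /=; by rewrite -lt0n.
  - move=> z Hz; rewrite Hsz.
    case: (leqP (hi g - lo g + lo f) z) => H1.
      by exists (hi g - lo g + lo f); split => //; lia.
    case: (leqP z (hi g - lo g)) => H2.
    + case: (boolP (0 < mult f (z + lo f))) => HS.
      * have [p [q [Epq [Ap Bq]]]] := (E1 _).1 HS.
        have := Ar _ Ap; have := F1 _ Bq; have := F4 _ _ Aa Bq => h3 h2 h1.
        exists (p - lo g); split; first lia.
        -- apply: phi_pos_low; first lia. by rewrite subnK //; lia.
        -- lia.
      * exists z; split => //; last lia.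
        by rewrite mult_phi_low // (negbTE HS).
    + exists z; split => //; last lia.
      have -> : z = hi g - lo g + (z - (hi g - lo g)) by lia.
      rewrite mult_phi_top; last lia. by case: ifP.
Qed.

Lemma phi_inj b k f g1 g2 : 1 <= b -> (forall a, k < a -> mult f a = 0) ->
  (exists a, 0 < mult f a) -> divisor b g1 f -> divisor b g2 f ->
  phi f g1 = phi f g2 -> g1 = g2.
Proof.
  move=> Hb Hk Hnz D1 D2 E.
  have [h1 [[Hg1 _ _ _ _] [[Aal1 _ Ar1 alm1 _] [_ _ F51]]]] := div_facts Hb Hk Hnz D1.
  have [h2 [[Hg2 _ _ _ _] [[Aal2 _ Ar2 alm2 _] [_ _ F52]]]] := div_facts Hb Hk Hnz D2.
  have ala1 : lo g1 <= hi g1 by have := Ar1 _ Aal1; lia.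
  have ala2 : lo g2 <= hi g2 by have := Ar2 _ Aal2; lia.
  have Ht : hi g1 - lo g1 = hi g2 - lo g2.
    have := congr1 size E; rewrite !size_mkseq; lia.
  have Hj : forall j, 1 <= j <= lo f -> (j == lo g1) = (j == lo g2).
    move=> j Hj.
    have e1 := mult_phi_top g1 Hj. have e2 := mult_phi_top g2 Hj.
    rewrite E Ht e2 in e1. by move: e1; do 2 case: eqP.
  have Hal : lo g1 = lo g2.
    case: (posnP (lo g1)) => H1.
    - case: (posnP (lo g2)) => H2; first by rewrite H1 H2.
      have := Hj (lo g2); rewrite eqxx H1.
      have -> : (lo g2 == 0) = false by apply/eqP; lia.
      move=> HH; have : 1 <= lo g2 <= lo f by lia.
      by move/HH.
    - have HH := Hj (lo g1); rewrite eqxx in HH.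
      have : 1 <= lo g1 <= lo f by lia.
      by move/HH => /esym/eqP.
  apply: (mset_eq Hg1 Hg2) => y.
  case: (ltnP y (lo g1)) => Hy1.
    have Z1 : mult g1 y = 0 by case: (posnP (mult g1 y)) => // /Ar1; lia.
    have Z2 : mult g2 y = 0 by case: (posnP (mult g2 y)) => // /Ar2; lia.
    by rewrite Z1 Z2.
  case: (leqP y (hi g1)) => Hy2; last first.
    have Z1 : mult g1 y = 0 by case: (posnP (mult g1 y)) => // /Ar1; lia.
    have Z2 : mult g2 y = 0 by case: (posnP (mult g2 y)) => // /Ar2; lia.
    by rewrite Z1 Z2.
  have := congr1 (fun s => mult s (y - lo g1)) E => /=.
  rewrite mult_phi_low; last lia. rewrite mult_phi_low; last lia.
  rewrite -Hal subnK //.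
  case: ifP => [_ -> // | /negbT HS _].
  have Z1 : mult g1 y = 0.
    case: (posnP (mult g1 y)) => // Hp. have := F51 (y - lo g1); rewrite subnK // => /(_ Hp).
    by rewrite (negbTE HS).
  have Z2 : mult g2 y = 0.
    case: (posnP (mult g2 y)) => // Hp. have := F52 (y - lo g2); rewrite subnK; last lia.
    by move=> /(_ Hp); rewrite -Hal (negbTE HS).
  by rewrite Z1 Z2.
Qed.

Lemma phi_kset b k f g : 2 <= b -> (forall a, k < a -> mult f a = 0) ->
  (exists a, 0 < mult f a) -> mset b f -> divisor b g f -> lo f = 0 -> phi f g = kset k -> f = kset k.
Proof.
  move=> Hb Hk Hnz Hf D Hm E.
  have Hb1 : 1 <= b by lia.
  have [h [[Hg Es E1 Sm Smin] [[Aal Aa Ar alm Bma] [F1 F4 F5]]]] := div_facts Hb1 Hk Hnz D.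
  have Hal : lo g = 0 by lia.
  have ala : lo g <= hi g by have := Ar _ Aal; lia.
  have Hhk : hi g = k.
    have := congr1 size E; rewrite size_mkseq /kset size_nseq Hal Hm; lia.
  have Hlow : forall x, x <= k -> 0 < mult f x /\ mult g x = 1.
    move=> x Hx; have := congr1 (fun s => mult s x) E => /=.
    rewrite mult_phi_low; last lia. rewrite mult_kset Hx Hm Hal !addn0.
    by case: ifP.
  have Hg1 : forall y, mult g y <= 1.
    move=> y; case: (leqP y k) => Hy; first by rewrite (Hlow y Hy).2.
    case: (posnP (mult g y)) => [-> //| Hp]; have := Ar _ Hp; lia.
  have Hf1 : forall x, mult f x <= 1.
    move=> x; case: (leqP (mult f x) 1) => // H2.
    have Hr : 1 <= 2 <= b by rewrite Hb.
    have := (Es 2 Hr x).1 H2.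
    case=> p [q [_ [Hp _]]]; have := Hg1 p; rewrite /level in Hp; lia.
  apply: (mset_eq Hf (mset_kset k Hb1)) => x; rewrite mult_kset; case: ifP => Hx.
  - have := (Hlow x Hx).1; have := Hf1 x; lia.
  - apply: Hk; lia.
Qed.

Theorem mainTheorem3 (b k : nat) (f : seq nat) :
  2 <= b -> mset b f ->
  (forall a, k < a -> mult f a = 0) ->
  (exists a, mult f a != 0) ->
  exists n m, ndiv b f n /\ ndiv b (kset k) m /\ n <= m /\
    (f <> kset k -> n < m).
Proof.
  move=> Hb Hf Hk [a0 Ha0].
  have Hb1 : 1 <= b by lia.
  have Hnz : exists a, 0 < mult f a by exists a0; rewrite lt0n.
  have Hnzk : exists a, 0 < mult (kset k) a by exists 0; rewrite mult_kset.
  have [lf [Uf Mf]] := @list_ex b (fun g => divisor b g f) (size f)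
    (fun g D => conj D.1 (div_size Hb1 Hnz D)).
  have [lk [Uk Mk]] := @list_ex b (fun g => divisor b g (kset k)) (size (kset k))
    (fun g D => conj D.1 (div_size Hb1 Hnzk D)).
  exists (size lf), (size lk).
  have Hsub : {subset map (phi f) lf <= lk}.
    by move=> w /mapP [g /Mf Dg ->]; apply/Mk; exact: (phi_div Hb Hk Hnz Dg).
  have Huniq : uniq (map (phi f) lf).
    rewrite map_inj_in_uniq // => g1 g2 /Mf D1 /Mf D2; exact: (phi_inj Hb1 Hk Hnz D1 D2).
  split; first by exists lf.
  split; first by exists lk.
  split; first by rewrite -(size_map (phi f)); exact: uniq_leq_size.
  move=> Hne.
  have [w [Hw Hnw]] : exists w, w \in lk /\ w \notin map (phi f) lf.
    case: (posnP (lo f)) => Hm.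
    - exists (kset k); split.
      + apply/Mk; apply: div_kset => //; first exact: mset_kset.
        move=> z Hz; exists z; split => //; first by rewrite mult_kset Hz.
        rewrite /kset size_nseq; lia.
      + apply/mapP => [[g /Mf Dg Eg]]; apply: Hne.
        exact: (phi_kset Hb Hk Hnz Hf Dg Hm (esym Eg)).
    - exists [:: 1]; split.
      + apply/Mk; apply: div_kset => //; first exact: (mset_kset 0 Hb1).
        move=> z Hz; exists 0; split => //=; lia.
      + apply/mapP => [[g _ Eg]]; have := congr1 size Eg; rewrite size_mkseq /=; lia.
  have := @uniq_leq_size _ (w :: map (phi f) lf) lk.
  rewrite /= Hnw Huniq size_map; apply => //.
  by move=> x; rewrite inE => /orP[/eqP -> // | ]; exact: Hsub.
Qed.
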